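(* Suppose $(J,F,Y)$ is a splitting pullback triple with $J:\mathcal X\to\mathcal H$, $F:\mathcal X\to\mathcal E$. Then $J$ and $F$ are partial isometries and $$\mathcal N(F)=\mathcal R(J^* ),\quad \mathcal R(J)=\mathcal H,\qquad \mathcal N(J)=\mathcal R(F^* ),\quad \mathcal R(F)=\mathcal E.$$
   Context: For Hilbert spaces $\mathcal H,\mathcal X,\mathcal E$, a pullback triple $(J,F,Y)$ consists of $J:\mathcal X\to\mathcal H$, $F:\mathcal X\to\mathcal E$ bounded with dense range, $Y:\mathcal H\to\mathcal X$ a completion operator (densely defined injective linear map with dense range), with $\|u\|_{\mathcal X}^2=\|Ju\|^2+\|Fu\|_{\mathcal E}^2$ for all $u\in\mathcal X$ and $JYf=f$ for $f\in\mathcal D(Y)$. The triple is splitting if $F$ is a partial isometry (equivalently $\mathcal X=\mathcal N(J)\oplus\mathcal N(F)$, or $JF^*=0$, or $J\mathcal N(F)$ dense in $\mathcal H$). $\mathcal N,\mathcal R$ denote null space and range. *)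

(* Defs.v *)
From mathcomp Require Import all_boot all_order all_algebra.
From mathcomp Require Import all_classical all_reals.
From mathcomp.real_closed Require Import complex.
Set Implicit Arguments. Unset Strict Implicit. Unset Printing Implicit Defensive.
Import Order.TTheory GRing.Theory Num.Theory.
Local Open Scope ring_scope.

Definition is_inner_product (R : realType) (V : lmodType R[i])
    (ip : V -> V -> R[i]) : Prop :=
  [/\ (forall (a : R[i]) (x y z : V), ip (a *: x + y) z = a * ip x z + ip y z),
      (forall x y : V, ip y x = (ip x y)^*),
      (forall x : V, 0 <= ip x x) &
      (forall x : V, ip x x = 0 -> x = 0)].

Definition ipnorm (R : realType) (V : lmodType R[i]) (ip : V -> V -> R[i])
  (x : V) : R[i] := sqrtC (ip x x).

Definition ip_complete (R : realType) (V : lmodType R[i])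
    (ip : V -> V -> R[i]) : Prop :=
  forall u : nat -> V,
    (forall e : R[i], 0 < e -> exists N, forall m n, (N <= m)%N -> (N <= n)%N ->
        ipnorm ip (u m - u n) < e) ->
    exists l : V, forall e : R[i], 0 < e -> exists N, forall n, (N <= n)%N ->
        ipnorm ip (u n - l) < e.

Record hilbert (R : realType) := Hilbert {
  hcar :> lmodType R[i];
  hinner : hcar -> hcar -> R[i];
  hinner_ax : @is_inner_product R hcar hinner;
  hcomplete : @ip_complete R hcar hinner }.

Definition hnorm (R : realType) (V : hilbert R) (x : V) : R[i] :=
  @ipnorm R V (@hinner R V) x.


Definition is_linear (R : realType) (V W : hilbert R) (T : V -> W) : Prop :=
  forall (a : R[i]) (x y : V), T (a *: x + y) = a *: T x + T y.

Definition bounded_op (R : realType) (V W : hilbert R) (T : V -> W) : Prop :=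
  is_linear T /\ exists M : R[i], forall x : V, hnorm (T x) <= M * hnorm x.

Definition dense_in (R : realType) (V : hilbert R) (A : V -> Prop) : Prop :=
  forall (x : V) (e : R[i]), 0 < e -> exists y, A y /\ hnorm (x - y) < e.

(* range T : the library's [range T] = [set y | exists x, T x = y] *)

Definition kernel (R : realType) (V W : hilbert R) (T : V -> W) : V -> Prop :=
  fun x => T x = 0.

Definition is_adjoint (R : realType) (V W : hilbert R) (T : V -> W)
    (Tadj : W -> V) : Prop :=
  forall (x : V) (y : W), hinner (T x) y = hinner x (Tadj y).

Definition orth (R : realType) (V : hilbert R) (A : V -> Prop) : V -> Prop :=
  fun x => forall y, A y -> hinner x y = 0.

Definition partial_isometry (R : realType) (V W : hilbert R) (T : V -> W) : Prop :=
  bounded_op T /\ forall x, orth (kernel T) x -> hnorm (T x) = hnorm x.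

Definition completion_operator (R : realType) (H X : hilbert R)
    (D : H -> Prop) (Y : H -> X) : Prop :=
  D 0 /\ (forall (a : R[i]) f g, D f -> D g -> D (a *: f + g)) /\
      dense_in D /\
      (forall (a : R[i]) f g, D f -> D g -> Y (a *: f + g) = a *: Y f + Y g) /\
      (forall f g, D f -> D g -> Y f = Y g -> f = g) /\
      dense_in (fun x => exists f, D f /\ Y f = x).

Definition pullback_triple (R : realType) (H X E : hilbert R)
    (J : X -> H) (F : X -> E) (D : H -> Prop) (Y : H -> X) : Prop :=
  bounded_op J /\ dense_in (range J) /\
      bounded_op F /\ dense_in (range F) /\
      completion_operator D Y /\
      (forall u : X, hnorm u ^+ 2 = hnorm (J u) ^+ 2 + hnorm (F u) ^+ 2) /\
      (forall f, D f -> J (Y f) = f).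

Definition splitting_pullback_triple (R : realType) (H X E : hilbert R)
    (J : X -> H) (F : X -> E) (D : H -> Prop) (Y : H -> X) : Prop :=
  pullback_triple J F D Y /\ partial_isometry F.

(* Main.v *)
Require Import Defs.
From mathcomp Require Import all_boot all_order all_algebra.
From mathcomp Require Import all_classical all_reals.
From mathcomp.real_closed Require Import complex.
From mathcomp Require Import ring.
Import Order.TTheory GRing.Theory Num.Theory.
Local Open Scope ring_scope.

Section Basics.
Variable R : realType.
Local Notation C := (R[i]).

Section IP.
Variable V : hilbert R.
Local Notation ip := (@hinner R V).

Lemma ipZDl (a : C) (x y z : V) : ip (a *: x + y) z = a * ip x z + ip y z.
Proof. by have [h _ _ _] := hinner_ax V; apply: h. Qed.
Lemma ipC (x y : V) : ip y x = (ip x y)^*.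
Proof. by have [_ h _ _] := hinner_ax V; apply: h. Qed.
Lemma ip_ge0 (x : V) : 0 <= ip x x.
Proof. by have [_ _ h _] := hinner_ax V; apply: h. Qed.
Lemma ip_eq0 (x : V) : ip x x = 0 -> x = 0.
Proof. by have [_ _ _ h] := hinner_ax V; apply: h. Qed.

Lemma ip0l (z : V) : ip 0 z = 0.
Proof.
have := ipZDl 1 0 0 z; rewrite scale1r addr0 mul1r => h.
by apply: (addrI (ip 0 z)); rewrite addr0 -h.
Qed.
Lemma ipDl (x y z : V) : ip (x + y) z = ip x z + ip y z.
Proof. by rewrite -[x]scale1r ipZDl mul1r scale1r. Qed.
Lemma ipZl (a : C) (x z : V) : ip (a *: x) z = a * ip x z.
Proof. by rewrite -[a *: x]addr0 ipZDl ip0l addr0. Qed.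
Lemma ipNl (x z : V) : ip (- x) z = - ip x z.
Proof. by rewrite -scaleN1r ipZl mulN1r. Qed.
Lemma ipBl (x y z : V) : ip (x - y) z = ip x z - ip y z.
Proof. by rewrite ipDl ipNl. Qed.
Lemma ip0r (z : V) : ip z 0 = 0.
Proof. by rewrite ipC ip0l conjC0. Qed.
Lemma ipDr (x y z : V) : ip z (x + y) = ip z x + ip z y.
Proof. by rewrite ipC ipDl rmorphD /= -!ipC. Qed.
Lemma ipZr (a : C) (x z : V) : ip z (a *: x) = a^* * ip z x.
Proof. by rewrite ipC ipZl rmorphM /= -ipC. Qed.
Lemma ipNr (x z : V) : ip z (- x) = - ip z x.
Proof. by rewrite ipC ipNl rmorphN /= -ipC. Qed.
Lemma ipBr (x y z : V) : ip z (x - y) = ip z x - ip z y.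
Proof. by rewrite ipDr ipNr. Qed.

Lemma ip_ext (x y : V) : (forall z, ip x z = ip y z) -> x = y.
Proof.
move=> h; apply/eqP; rewrite -subr_eq0; apply/eqP/ip_eq0.
by rewrite ipBl h subrr.
Qed.

Lemma hnorm2 (x : V) : hnorm x ^+ 2 = ip x x.
Proof. by rewrite /hnorm /ipnorm sqrtCK. Qed.

Lemma hnorm_ge0 (x : V) : 0 <= hnorm x.
Proof. by rewrite /hnorm /ipnorm sqrtC_ge0 ip_ge0. Qed.

Lemma ip_lt_hnorm (x : V) (e : C) : 0 < e -> hnorm x < e -> ip x x < e ^+ 2.
Proof.
move=> e0 h; rewrite -hnorm2 ltrXn2r //; exact: hnorm_ge0.
Qed.

Lemma hnorm_lt_ip (x : V) (e : C) : 0 < e -> ip x x < e ^+ 2 -> hnorm x < e.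
Proof.
move=> e0 h; rewrite /hnorm /ipnorm -(sqrCK (ltW e0)).
by rewrite ltr_sqrtC // qualifE /= ?ip_ge0 // exprn_ge0 // ltW.
Qed.

Lemma parallelogram (a b : V) : ip (a - b) (a - b) <= 2 * ip a a + 2 * ip b b.
Proof.
have e1 : ip (a - b) (a - b) + ip (a + b) (a + b) = 2 * ip a a + 2 * ip b b.
  rewrite !ipBl !ipDl !ipBr !ipDr; ring.
rewrite -e1 lerDl; exact: ip_ge0.
Qed.

End IP.

Section Lin.
Variables V W : hilbert R.
Variable T : V -> W.
Hypothesis lT : is_linear T.
Lemma lin0 : T 0 = 0.
Proof.
have := lT 1 0 0; rewrite scale1r addr0 scale1r => h.
by apply: (addrI (T 0)); rewrite addr0 -h.
Qed.
Lemma linD x y : T (x + y) = T x + T y.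
Proof. rewrite -{1}[x]scale1r lT scale1r. by []. Qed.
Lemma linZ a x : T (a *: x) = a *: T x.
Proof. by rewrite -[a *: x]addr0 lT lin0 addr0. Qed.
Lemma linN x : T (- x) = - T x.
Proof. by rewrite -scaleN1r linZ scaleN1r. Qed.
Lemma linB x y : T (x - y) = T x - T y.
Proof. by rewrite linD linN. Qed.
End Lin.

Lemma adj0 (V W : hilbert R) (T : V -> W) Ta : is_adjoint T Ta -> Ta 0 = 0.
Proof.
move=> h; apply: ip_ext => z; rewrite ip0l ipC -h ip0r; exact: conjC0.
Qed.

Lemma adjC (V W : hilbert R) (T : V -> W) Ta : is_adjoint T Ta ->
  forall x y, hinner (Ta y) x = hinner y (T x).
Proof. by move=> h x y; rewrite ipC -h -ipC. Qed.

Lemma polar (V : lmodType C) (B : V -> V -> C) :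
  (forall x y z, B (x + y) z = B x z + B y z) ->
  (forall x y z, B z (x + y) = B z x + B z y) ->
  (forall a x z, B (a *: x) z = a * B x z) ->
  (forall a x z, B z (a *: x) = a^* * B z x) ->
  (forall x, B x x = 0) -> forall x y, B x y = 0.
Proof.
move=> Dl Dr Zl Zr B0 x y.
have h1 : B x y + B y x = 0.
  by have := B0 (x + y); rewrite Dl !Dr !B0 add0r addr0.
have h2 : B x ('i *: y) + B ('i *: y) x = 0.
  by have := B0 (x + 'i *: y); rewrite Dl !Dr !B0 add0r addr0.
rewrite Zl Zr conjCi in h2.
have h3 : B y x = - B x y by apply/eqP; rewrite -addr_eq0 addrC h1.
move/eqP: h2; rewrite h3 mulrN mulNr -opprD oppr_eq0 -mulrDr mulf_eq0.
case/orP => [/eqP hi|].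
  by have := neq0Ci C; rewrite hi eqxx.
by rewrite -mulr2n mulrn_eq0 /= => /eqP.
Qed.

Lemma small (c : C) : 0 < c -> exists N, forall n, (N <= n)%N -> (n.+1%:R : C)^-1 < c.
Proof.
move=> c0.
have cr : c \is Num.real by exact: gtr0_real.
have [k ck] := complex_realP _ cr.
have k0 : 0 < k by move: c0; rewrite ck ltcE /= eqxx.
exists (Num.Def.archi_bound k^-1) => n hn.
have h1 : k^-1 < n.+1%:R.
  apply: (lt_le_trans (archi_boundP _)); first by rewrite invr_ge0 ltW.
  by rewrite ler_nat (leq_trans hn).
rewrite ck -(@rmorph_nat _ _ (@real_complex R)) -rmorphV ?unitfE ?pnatr_eq0 //= ltcR.
by rewrite -(invrK k) ltf_pV2 // qualifE /= ?invr_gt0 ?ltr0n.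
Qed.

Lemma ipN2 (V : hilbert R) (x y : V) : hinner (x - y) (x - y) = hinner (y - x) (y - x).
Proof. by rewrite -opprB ipNl ipNr opprK. Qed.

Lemma four_split (a b e : C) : 0 < e -> a < e / 4 -> b < e / 4 -> 2 * a + 2 * b < e.
Proof.
move=> e0 ha hb.
have -> : e = 2 * (e / 4) + 2 * (e / 4).
  by field.
by apply: (@ltrD _ (2*a)); rewrite ltr_pM2l ?ltr0n.
Qed.

Lemma surj (X K : hilbert R) (A : X -> K) (Cf : X -> X) (Z : X -> Prop) :
  is_linear A ->
  (forall u, hinner (A u) (A u) <= hinner u u) ->
  (forall u, Z u -> hinner (A u) (A u) = hinner u u) ->
  (forall x y, Z ((x - Cf x) - (y - Cf y))) ->
  (forall x, A (Cf x) = 0) ->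
  dense_in (range A) -> forall k, range A k.
Proof.
move=> lA le iso Zd AC dA k.
have ex : forall n : nat, exists x, hinner (k - A x) (k - A x) < (n.+1%:R)^-1.
  move=> n; have e0 : 0 < sqrtC ((n.+1%:R : C)^-1) by rewrite sqrtC_gt0 invr_gt0 ltr0n.
  have [y [yr hy]] := dA k _ e0; case: yr => x _ hx; rewrite -hx in hy; exists x.
  by have := ip_lt_hnorm _ _ _ e0 hy; rewrite sqrtCK.
have [xs hxs] := choice ex.
pose t := fun n => xs n - Cf (xs n).
have At : forall n, A (t n) = A (xs n) by move=> n; rewrite /t linB // AC subr0.
have td : forall m n, hinner (t m - t n) (t m - t n)
    <= 2 * hinner (k - A (xs n)) (k - A (xs n)) + 2 * hinner (k - A (xs m)) (k - A (xs m)).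
  move=> m n; rewrite -iso; last exact: Zd.
  rewrite linB // !At.
  have -> : A (xs m) - A (xs n) = (k - A (xs n)) - (k - A (xs m)).
    by rewrite opprB [RHS]addrC -addrA addKr.
  exact: parallelogram.
have cauchy : forall e : C, 0 < e -> exists N, forall m n, (N <= m)%N -> (N <= n)%N ->
    ipnorm (@hinner R X) (t m - t n) < e.
  move=> e e0.
  have e40 : 0 < e ^+ 2 / 4 by rewrite divr_gt0 ?exprn_gt0 ?ltr0n.
  have [N hN] := small _ e40; exists N => m n hm hn.
  apply: (@hnorm_lt_ip X) => //; apply: (le_lt_trans (td m n)).
  apply: four_split; first by rewrite exprn_gt0.
    exact: (lt_trans (hxs n) (hN n hn)).
  exact: (lt_trans (hxs m) (hN m hm)).
have [l hl] := hcomplete cauchy.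
exists l => //.
set c := hinner (A l - k) (A l - k).
have c0 : 0 <= c by exact: ip_ge0.
have small_c : forall d : C, 0 < d -> c < d.
  move=> d d0.
  have d40 : 0 < d / 4 by rewrite divr_gt0 ?ltr0n.
  have [N1 hN1] := small _ d40.
  have s0 : 0 < sqrtC (d / 4) by rewrite sqrtC_gt0.
  have [N2 hN2] := hl _ s0.
  pose n := maxn N1 N2.
  have h1 := hN1 n (leq_maxl _ _).
  have h2 := ip_lt_hnorm _ _ _ s0 (hN2 n (leq_maxr _ _)); rewrite sqrtCK in h2.
  rewrite /c; have -> : A l - k = A (l - t n) - (k - A (xs n)).
    by rewrite linB // At opprB addrA subrK.
  apply: (le_lt_trans (parallelogram _ _ _)); apply: four_split => //.
    by apply: (le_lt_trans (le _)); rewrite ipN2.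
  exact: (lt_trans (hxs n) h1).
have : c = 0.
  apply/eqP; apply: contraT => cn; have cp : 0 < c by rewrite lt_def cn c0.
  by have := small_c c cp; rewrite ltxx.
by move/ip_eq0/eqP; rewrite subr_eq0 => /eqP.
Qed.

End Basics.
Arguments adjC {R V W T Ta}.
Arguments adj0 {R V W T Ta}.

Theorem mainTheorem7 (R : realType) (H X E : hilbert R)
    (J : X -> H) (F : X -> E) (D : H -> Prop) (Y : H -> X)
    (Jadj : H -> X) (Fadj : E -> X) :
  splitting_pullback_triple J F D Y ->
  is_adjoint J Jadj -> is_adjoint F Fadj ->
  partial_isometry J /\ partial_isometry F /\
      (forall u : X, kernel F u <-> range Jadj u) /\
      (forall f : H, range J f) /\
      (forall u : X, kernel J u <-> range Fadj u) /\
      (forall e : E, range F e).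
Proof.
move=> [[bJ [dJ [bF [dF [comp [nid JY]]]]]] piF] adjJ adjF.
have linJ := bJ.1; have linF := bF.1.
have nid' : forall u, hinner u u = hinner (J u) (J u) + hinner (F u) (F u).
  by move=> u; have := nid u; rewrite !hnorm2.
have isoF := piF.2.
have S1 : forall e, J (Fadj e) = 0.
  move=> e.
  have o : orth (kernel F) (Fadj e).
    by move=> y; rewrite /kernel => hy; rewrite (adjC adjF) hy ip0r.
  have := isoF _ o => /(congr1 (fun z => z ^+ 2)); rewrite !hnorm2 => h.
  have h' := nid' (Fadj e); rewrite h in h'.
  apply: ip_eq0; apply: (addIr (hinner (Fadj e) (Fadj e))).
  by rewrite add0r -h'.
have S2 : forall h, F (Jadj h) = 0.
  move=> h; apply: ip_ext => z.
  by rewrite ip0l adjF (adjC adjJ) S1 ip0r.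
pose B := fun x y : X => hinner (J x) (J y) + hinner (F x) (F y) - hinner x y.
have B0 : forall x y, B x y = 0.
  apply: polar.
  - by move=> x y z; rewrite /B !linD // !ipDl; ring.
  - by move=> x y z; rewrite /B !linD // !ipDr; ring.
  - by move=> a x z; rewrite /B !linZ // !ipZl; ring.
  - by move=> a x z; rewrite /B !linZ // !ipZr; ring.
  - by move=> x; rewrite /B (nid' x) subrr.
have S3 : forall x, Jadj (J x) + Fadj (F x) = x.
  move=> x; apply: ip_ext => y.
  rewrite ipDl !(adjC adjJ, adjC adjF).
  by have := B0 x y; rewrite /B => /eqP; rewrite subr_eq0 => /eqP.
have e1 : forall x, x - Fadj (F x) = Jadj (J x).
  by move=> x; rewrite -{1}(S3 x) addrK.
have e2 : forall x, x - Jadj (J x) = Fadj (F x).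
  by move=> x; rewrite -{1}(S3 x) [_ + Fadj _]addrC addrK.
split.
  split; first exact: bJ.
  move=> x ox.
  have Fx0 : F x = 0.
    apply: ip_ext => e; rewrite ip0l adjF; apply: ox; exact: S1.
  by rewrite /hnorm /ipnorm [in RHS](nid' x) Fx0 ip0l addr0.
split; first exact: piF.
split.
  move=> u; split.
    move=> Fu0; exists (J u) => //.
    by have := S3 u; rewrite /kernel in Fu0; rewrite Fu0 (adj0 adjF) addr0.
  by case=> h _ <-; exact: S2.
split.
  apply: (@surj _ _ _ J (fun x => Fadj (F x)) (kernel F)) => //.
  - by move=> u; rewrite [X in _ <= X]nid' lerDl ip_ge0.
  - by move=> u; rewrite /kernel => hu; rewrite nid' hu ip0l addr0.
  - by move=> x y; rewrite /kernel !e1 linB // !S2 subrr.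
split.
  move=> u; split.
    move=> Ju0; exists (F u) => //.
    by have := S3 u; rewrite /kernel in Ju0; rewrite Ju0 (adj0 adjJ) add0r.
  by case=> h _ <-; exact: S1.
apply: (@surj _ _ _ F (fun x => Jadj (J x)) (kernel J)) => //.
- by move=> u; rewrite [X in _ <= X]nid' lerDr ip_ge0.
- by move=> u; rewrite /kernel => hu; rewrite nid' hu ip0l add0r.
- by move=> x y; rewrite /kernel !e2 linB // !S1 subrr.
Qed.
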